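(* Let $N\ge1$, $a_i>0$ with $\sum_{i=1}^Na_i=1$, and $x_i\in\mathsf X$ with $x_i\ne x_j$ for $i\ne j$; set $\bar\mu=\sum_{i=1}^Na_i\delta_{x_i}$. Let $\mu:[0,+\infty)\to\mathcal P_2(\mathsf X)$ with $\mu_0=\bar\mu$ be such that $\#\operatorname{supp}(\mu_t)$ is finite and non-increasing in $t\ge0$. Assume that $\boldsymbol\eta\in\mathcal P(\mathrm C([0,+\infty);\mathsf X))$ satisfies $(\mathsf e_t)_\sharp\boldsymbol\eta=\mu_t$ for every $t\ge0$. Then $\boldsymbol\eta=\sum_{i=1}^Na_i\delta_{\gamma_i}$ for curves $\gamma_i\in\mathrm C([0,+\infty);\mathsf X)$ such that (P1) $\gamma_i\ne\gamma_j$ for $i\ne j$; (P2) $\gamma_i(0)=x_i$, $i=1,\dots,N$; (P3) if $\gamma_i(s)=\gamma_j(s)$ for some $s\ge0$ and $i\ne j$, then $\gamma_i(t)=\gamma_j(t)$ for every $t\ge s$. In particular, if $\boldsymbol\eta_1,\boldsymbol\eta_2\in\mathcal P(\mathrm C([0,+\infty);\mathsf X))$ satisfy $(\mathsf e_t)_\sharp\boldsymbol\eta_1=(\mathsf e_t)_\sharp\boldsymbol\eta_2=\mu_t$ for every $t\ge0$, then $\boldsymbol\eta_1=\boldsymbol\eta_2$.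
   Context: $\mathsf X$ is a separable Hilbert space; $\mathrm C([0,+\infty);\mathsf X)$ carries the topology of uniform convergence on compact sets and $\mathcal P(\cdot)$ denotes Borel probability measures; $\mathsf e_t(\gamma)=\gamma(t)$; $\operatorname{supp}$ is the support of a measure. *)

(* Defs.v *)
From HB Require Import structures.
From mathcomp Require Import all_boot all_order all_algebra.
From mathcomp Require Import all_classical all_reals all_analysis.
Set Implicit Arguments. Unset Strict Implicit. Unset Printing Implicit Defensive.
Import Order.TTheory GRing.Theory Num.Theory.
Import numFieldNormedType.Exports.
Local Open Scope classical_set_scope.
Local Open Scope ring_scope.

Definition is_inner_product (R : realType) (X : normedModType R)
  (ip : X -> X -> R) : Prop :=
  (forall x y, ip x y = ip y x) /\
  (forall a x y z, ip (a *: x + y) z = a * ip x z + ip y z) /\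
  (forall x, ip x x = `|x| ^+ 2).

Definition separable (T : topologicalType) : Prop :=
  exists D : set T, countable D /\ dense D.

Definition borel (T : topologicalType) := g_sigma_algebraType (@open T).

(* C([0,+oo); X), encoded by the canonical representative which is
   continuous on R and constant (= gamma 0) on (-oo, 0]. *)
Definition is_curve (R : realType) (X : normedModType R) (g : R -> X) : Prop :=
  continuous g /\ (forall t, t <= 0 -> g t = g 0).

Definition curve (R : realType) (X : normedModType R) :=
  {g : R -> X | is_curve g}.

Lemma cst0_curve (R : realType) (X : normedModType R) :
  is_curve (fun _ : R => (0 : X)).
Proof. by split => // t; exact: cvg_cst. Qed.

HB.instance Definition _ (R : realType) (X : normedModType R) :=
  gen_eqMixin (curve X).
HB.instance Definition _ (R : realType) (X : normedModType R) :=
  gen_choiceMixin (curve X).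
HB.instance Definition _ (R : realType) (X : normedModType R) :=
  isPointed.Build (curve X) (exist _ _ (@cst0_curve R X)).

Definition ev (R : realType) (X : normedModType R) (t : R) (g : curve X) : X :=
  proj1_sig g t.

(* open sets of the topology of uniform convergence on compact subsets
   of [0,+oo) *)
Definition curve_open (R : realType) (X : normedModType R) (U : set (curve X)) :=
  forall g, U g -> exists T eps : R, 0 < eps /\
    forall h : curve X, (forall t, 0 <= t <= T -> `|ev t h - ev t g| < eps) -> U h.

Definition curve_borel (R : realType) (X : normedModType R) :=
  g_sigma_algebraType (@curve_open R X).

Definition supp (R : realType) (X : normedModType R)
  (mu : set (borel X) -> \bar R) : set X :=
  [set x | forall U : set X, open U -> U x -> (0 < mu U)%E].

Definition finite_second_moment (R : realType) (X : normedModType R)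
  (mu : probability (borel X) R) : Prop :=
  (\int[mu]_(x in [set: borel X]) ((`|(x : X)| ^+ 2)%:E) < +oo)%E.

Definition push_ev (R : realType) (X : normedModType R) (t : R)
  (eta : probability (curve_borel X) R) (mu : probability (borel X) R) : Prop :=
  forall A : set (borel X), measurable A ->
    eta (@ev R X t @^-1` A) = mu A.

(* Main.v *)
Require Import Defs.
From HB Require Import structures.
From mathcomp Require Import all_boot all_order all_algebra.
From mathcomp Require Import all_classical all_reals all_analysis.
Import Order.TTheory GRing.Theory Num.Theory.
Import numFieldNormedType.Exports.
Local Open Scope classical_set_scope.
Local Open Scope ring_scope.

Section Gen.
Context {R : realType} {X : normedModType R}.

Lemma fin_closed (S : set X) : finite_set S -> closed S.
Proof.
move=> fS.
have -> : S = \bigcup_(y in S) [set y].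
  by apply/seteqP; split=> [y Sy|y [z Sz ->]]//; exists y.
apply: closed_bigcup => // i _.
exact/accessible_closed_set1/hausdorff_accessible/norm_hausdorff.
Qed.

Lemma open_meas (U : set X) : open U -> measurable (U : set (borel X)).
Proof. by move=> oU; apply: sub_sigma_algebra. Qed.

Lemma supp_null (hsep : separable X) (mu : probability (borel X) R) :
  exists A : set (borel X), [/\ measurable A, mu A = 0%E & ~` supp mu `<=` A].
Proof.
have [D [cD dD]] := hsep.
have /pcard_surjP [g gs] := cD.
pose B m k : set X := ball (g m) (k.+1%:R^-1).
pose C m k : set (borel X) := B m k `&` [set _ | mu (B m k) = 0%E].
have nC : forall m k, mu.-negligible (C m k).
  move=> m k; have [h|h] := pselect (mu (B m k) = 0%E).
    exists (B m k); split => //; first by apply: open_meas; exact: ball_open.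
    by move=> y [].
  exists set0; split; [exact: measurable0|exact: measure0|by move=> y []].
have /negligible_bigcup := fun m => negligible_bigcup (nC m).
move=> [A [mA A0 sA]]; exists A; split => //.
move=> y /= nsy; apply: sA.
have [U /not_implyP [oU /not_implyP [Uy]]] : exists U, ~ (open U -> U y -> (0 < mu U)%E).
  by apply/existsNP.
move=> /negP; rewrite -leNgt => mU0.
have mU : mu U = 0%E by apply/eqP; rewrite eq_le mU0 measure_ge0.
have : nbhs y U by apply: open_nbhs_nbhs.
move=> /nbhs_ballP[r /= r0 yrU].
have [k _ hk] : exists2 k : nat, True & k.+1%:R^-1 < r / 2.
  have r20 : 0 < r / 2 by rewrite divr_gt0.
  have := near_infty_natSinv_lt (PosNum r20).
  by move=> /= [k _ hk]; exists k => //; apply: (hk k) => /=.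
have [z [Bz Dz]] : (ball y (k.+1%:R^-1)) `&` D !=set0.
  apply: dD; first by exists y; apply: ballxx; rewrite invr_gt0.
  exact: ball_open.
have [m _ gmz] := gs z Dz.
exists m => //; exists k => //; split.
  by rewrite /B gmz; apply: ball_sym.
apply/eqP; rewrite eq_le measure_ge0 andbT -mU.
apply: le_measure; rewrite ?inE; [apply: open_meas; exact: ball_open|exact: open_meas|].
move=> w; rewrite /B gmz => zw; apply: yrU.
have := ball_triangle Bz zw; apply: le_ball.
by rewrite [leRHS]splitr lerD // ltW.
Qed.

End Gen.
Section Gen2.
Context {R : realType} {X : normedModType R}.

Lemma closed_meas (U : set X) : closed U -> measurable (U : set (borel X)).
Proof.
move=> cU; rewrite -[U]setCK; apply: measurableC; apply: open_meas.
by rewrite openC.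
Qed.

Lemma set1_meas (z : X) : measurable ([set z] : set (borel X)).
Proof.
apply: closed_meas.
exact/accessible_closed_set1/hausdorff_accessible/norm_hausdorff.
Qed.

Lemma supp_full (hsep : separable X) (mu : probability (borel X) R) :
  finite_set (supp mu) -> mu (~` supp mu) = 0%E.
Proof.
move=> fS; have [A [mA A0 sA]] := supp_null hsep mu.
have mS : measurable (~` supp mu : set (borel X)).
  by apply: open_meas; rewrite openC; exact: fin_closed.
apply/eqP; rewrite eq_le measure_ge0 andbT -A0.
by apply: le_measure; rewrite ?inE.
Qed.

Lemma atom_pos (hsep : separable X) (mu : probability (borel X) R) z :
  finite_set (supp mu) -> supp mu z -> (0 < mu [set z])%E.
Proof.
move=> fS Sz; have [A [mA A0 sA]] := supp_null hsep mu.
pose U := ~` (supp mu `\ z).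
have oU : open U by rewrite openC; apply: fin_closed; exact: finite_setD.
have Uz : U z by move=> [_]; apply.
have := Sz U oU Uz => /lt_le_trans; apply.
have -> : mu [set z] = (mu [set z] + mu A)%E by rewrite A0 adde0.
apply: (le_trans _ (measureU2 _ (set1_meas z) mA)).
apply: le_measure; rewrite ?inE.
- exact: open_meas.
- exact: measurableU (set1_meas z) mA.
move=> w Uw; have [->|wz] := eqVneq w z; first by left.
right; apply: sA => Sw; apply: Uw; split => //.
by move=> /= wz'; rewrite wz' eqxx in wz.
Qed.

End Gen2.
Section Curves.
Context {R : realType} {X : normedModType R}.

Lemma ev_cont (g : curve X) : continuous (fun t => ev t g).
Proof. by case: g => g gc; case: (gc). Qed.

Lemma curve_ext (g h : curve X) :
  (forall t, 0 <= t -> ev t g = ev t h) -> g = h.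
Proof.
case: g h => g [cg hg] [h [ch hh]] /= E; apply: eq_exist.
apply/funext => t; have [t0|t0] := leP 0 t; first exact: E.
rewrite hg ?hh ?(ltW t0) //; exact: E.
Qed.

Lemma ev_meas t (A : set (borel X)) : 0 <= t -> measurable A ->
  measurable (ev t @^-1` A : set (curve_borel X)).
Proof.
move=> t0 mA.
have : measurable_fun setT (ev t : curve_borel X -> borel X).
  apply: measurability; first reflexivity.
  move=> _ [U oU <-]; apply: sub_sigma_algebra; rewrite setTI.
  move=> g /= Ug.
  have : nbhs (ev t g) U by apply: open_nbhs_nbhs.
  move=> /nbhs_ballP[e /= e0 eU].
  exists t, e; split => // h hh; apply: eU.
  by rewrite -ball_normE /ball_ /= distrC; apply: hh; rewrite t0 lexx.
by move=> /(_ measurableT A mA); rewrite setTI.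
Qed.

Lemma near_neq {g h : curve X} {s} : ev s g != ev s h ->
  \forall u \near s, ev u g != ev u h.
Proof.
move=> gh.
have cv : (fun u => ev u g - ev u h) @ s --> ev s g - ev s h.
  by apply: cvgB; apply: ev_cont.
have oY : open [set y : X | y != 0].
  rewrite (_ : [set y : X | y != 0] = ~` [set 0]); last first.
    by apply/seteqP; split => y /=; move/eqP.
  rewrite openC; exact/accessible_closed_set1/hausdorff_accessible/norm_hausdorff.
have : nbhs (ev s g - ev s h) [set y : X | y != 0].
  by apply: open_nbhs_nbhs; split => //=; rewrite subr_eq0.
move=> /cv H; move: H; apply: (@filterS _ (nbhs s)) => u /=; by rewrite subr_eq0.
Qed.

End Curves.
Section Core.
Context {R : realType} {X : normedModType R}.
Variables (mu : R -> probability (borel X) R) (n : R -> nat).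
Hypothesis hn : forall t, 0 <= t -> (supp (mu t) #= `I_(n t))%card.
Hypothesis hmono : forall s t, 0 <= s -> s <= t -> (n t <= n s)%N.

Definition Gs : set (curve X) :=
  [set g | forall q : rat, 0 <= (ratr q : R) -> supp (mu (ratr q)) (ev (ratr q) g)].

Lemma pigeon u k (c : 'I_k.+1 -> X) : 0 <= u -> (n u <= k)%N ->
  injective c -> (forall i, supp (mu u) (c i)) -> False.
Proof.
move=> u0 nk ic Sc.
have : (`I_k.+1 #<= `I_(n u))%card.
  rewrite -(card_le_eqr (hn u u0)).
  rewrite (card_le_eql (card_II)).
  rewrite -(card_le_eql (inj_card_eq (in2W ic))).
  by apply: subset_card_le => _ [i _ <-].
rewrite card_le_II => /leq_trans /(_ nk); by rewrite ltnn.
Qed.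

Lemma count_lem sig (c : 'I_(n sig).+1 -> curve X) e : 0 <= sig -> 0 < e ->
  (forall i, Gs (c i)) ->
  (forall u, sig < u < sig + e -> forall i j, i != j -> ev u (c i) != ev u (c j)) ->
  False.
Proof.
move=> s0 e0 Gc D.
have [q] : exists q : rat, (ratr q : R) \in `]sig, sig + e[.
  by apply: rat_in_itvoo; rewrite ltrDl.
rewrite in_itv /= => /andP[sq qe].
have q0 : 0 <= ratr q :> R by apply: le_trans s0 (ltW sq).
apply: (@pigeon (ratr q) (n sig) (fun i => ev (ratr q) (c i))) => //.
- by apply: hmono => //; exact: ltW.
- move=> i j eij; apply/eqP/negPn/negP => ij.
  by have := D (ratr q) (ltac:(by rewrite sq qe)) i j ij; rewrite eij eqxx.
- by move=> i; apply: Gc.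
Qed.

End Core.
Section Core2.
Context {R : realType} {X : normedModType R}.
Variables (mu : R -> probability (borel X) R) (n : R -> nat).
Hypothesis hn : forall t, 0 <= t -> (supp (mu t) #= `I_(n t))%card.
Hypothesis hmono : forall s t, 0 <= s -> s <= t -> (n t <= n s)%N.
Hypothesis Hrep : forall t z, 0 <= t -> supp (mu t) z ->
  exists g, Gs mu g /\ ev t g = z.

Lemma reps t : 0 <= t -> exists f : nat -> X, exists r : nat -> curve X,
  set_bij `I_(n t) (supp (mu t)) f /\
  forall j, (j < n t)%N -> Gs mu (r j) /\ ev t (r j) = f j.
Proof.
move=> t0; have /card_set_bijP[f fb] := card_esym (hn t t0).
have fS : set_fun `I_(n t) (supp (mu t)) f by case: fb.
have hex : forall j, exists g, (j < n t)%N -> Gs mu g /\ ev t g = f j.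
  move=> j; have [jk|jk] := ltnP j (n t); last first.
    by exists point.
  have [g [Gg eg]] := Hrep _ _ t0 (fS j jk).
  by exists g.
have [r hr] := choice hex.
by exists f, r; split.
Qed.

Lemma ord_cases {k} (i : 'I_k.+1) : (i < k)%N \/ (i : nat) = k.
Proof. by have := ltn_ord i; rewrite ltnS leq_eqVlt => /orP[/eqP|]; auto. Qed.

Lemma near_to_ball {sig} {P : R -> Prop} : (\forall u \near sig, P u) ->
  exists2 e : R, 0 < e & forall u, sig < u < sig + e -> P u.
Proof.
move=> /nbhs_ballP[e /= e0 He]; exists e => // u /andP[su ue]; apply: He.
rewrite -ball_normE /ball_ /= distrC ger0_norm ?subr_ge0 ?ltW //.
by rewrite ltrBlDl.
Qed.

Lemma inS t g : 0 <= t -> Gs mu g -> supp (mu t) (ev t g).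
Proof.
move=> t0 Gg; apply: contrapT => nS.
have [f [r [[fS finj fsurj] hr]]] := reps t t0.
pose c (i : 'I_(n t).+1) := if (i < n t)%N then r i else g.
have Gc : forall i, Gs mu (c i).
  by move=> i; rewrite /c; case: ifP => // ik; case: (hr i ik).
have cv : forall i : 'I_(n t).+1, ev t (c i) = if (i < n t)%N then f i else ev t g.
  by move=> i; rewrite /c; case: ifP => // ik; case: (hr i ik).
have H : \forall u \near t, forall p : 'I_(n t).+1 * 'I_(n t).+1,
    p.1 != p.2 -> ev u (c p.1) != ev u (c p.2).
  apply: (@filter_forall R _ _ (nbhs t) _) => -[i j] /=.
  have [->|ij] := eqVneq i j; first by apply: nearW => u; rewrite eqxx.
  have : ev t (c i) != ev t (c j).
    rewrite !cv; case: ifP => ik; case: ifP => jk.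
    - apply/eqP => /finj; rewrite !inE => /(_ ik jk) /val_inj eij.
      by rewrite eij eqxx in ij.
    - by apply/eqP => e; apply: nS; rewrite -e; apply: fS.
    - by apply/eqP => e; apply: nS; rewrite e; apply: fS.
    - have ei : (i : nat) = n t by case: (ord_cases i) => //; rewrite ik.
      have ej : (j : nat) = n t by case: (ord_cases j) => //; rewrite jk.
      by move: ij; rewrite -val_eqE /= ei ej eqxx.
  move=> /near_neq; apply: (@filterS _ (nbhs t)) => u /= h _; exact: h.
have [e e0 He] := near_to_ball H.
apply: (@count_lem _ _ mu n hn hmono t c e) => // u ut i j ij.
exact: (He u ut (i, j)).
Qed.
Lemma determ g h s : 0 <= s -> Gs mu g -> Gs mu h -> ev s g = ev s h ->
  forall t, s <= t -> ev t g = ev t h.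
Proof.
move=> s0 Gg Gh egh t st; apply: contrapT => /eqP dif.
pose E := [set u | (s <= u <= t) /\ ev u g = ev u h].
have Es : E s by split => //; rewrite lexx st.
have hsE : has_sup E.
  split; first by exists s.
  by exists t => u [/andP[_ ut] _].
pose sg := sup E.
have ssg : s <= sg := sup_upper_bound hsE Es.
have sgt : sg <= t.
  by apply: ge_sup; [exists s | move=> u [/andP[_ ut] _]].
have sg0 : 0 <= sg := le_trans s0 ssg.
have eqsg : ev sg g = ev sg h.
  apply: contrapT => /eqP d.
  have /nbhs_ballP[e /= e0 He] := near_neq d.
  have [u Eu ue] := sup_adherent e0 hsE.
  have usg : u <= sg := sup_upper_bound hsE Eu.
  have : ev u g != ev u h.
    apply: He; rewrite -ball_normE /ball_ /= ger0_norm ?subr_ge0 //.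
    by rewrite ltrBlDr -ltrBlDl.
  by case: Eu => _ ->; rewrite eqxx.
have sglt : sg < t.
  rewrite lt_neqAle sgt andbT; apply/eqP => e.
  by move: dif; rewrite -e eqsg eqxx.
have after : forall u, sg < u <= t -> ev u g != ev u h.
  move=> u /andP[su ut]; apply/eqP => e.
  have : E u by split => //; rewrite ut andbT (le_trans ssg) // ltW.
  by move=> /(sup_upper_bound hsE); rewrite leNgt su.
have Sw := inS sg g sg0 Gg.
have [f [r [[fS finj fsurj] hr]]] := reps sg sg0.
have [j0 j0k fj0] := fsurj _ Sw.
pose k := n sg.
pose c (i : 'I_k.+1) := if (i == j0 :> nat) then g else if (i < k)%N then r i else h.
pose phi (i : 'I_k.+1) := if (i < k)%N then (i : nat) else j0.
have phik : forall i, (phi i < k)%N by move=> i; rewrite /phi; case: ifP.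
have Gc : forall i, Gs mu (c i).
  move=> i; rewrite /c; case: ifP => // _; case: ifP => // ik.
  by case: (hr i ik).
have cv : forall i, ev sg (c i) = f (phi i).
  move=> i; rewrite /c /phi; case: eqP => [->|ij0].
    by rewrite j0k fj0.
  case: ifP => ik; first by case: (hr i ik).
  by rewrite fj0 -eqsg.
pose special (p : 'I_k.+1 * 'I_k.+1) :=
  ((p.1 == j0 :> nat) && (p.2 == k :> nat)) || ((p.1 == k :> nat) && (p.2 == j0 :> nat)).
have H : \forall u \near sg, forall p : 'I_k.+1 * 'I_k.+1,
    p.1 != p.2 -> ~~ special p -> ev u (c p.1) != ev u (c p.2).
  apply: (@filter_forall R _ _ (nbhs sg) _) => -[i j] /=.
  have [->|ij] := eqVneq i j; first by apply: nearW => u; rewrite eqxx.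
  have [sp|nsp] := boolP (special (i, j)); first by apply: nearW => u _ /negP nsp; exfalso; apply: nsp.
  have : ev sg (c i) != ev sg (c j).
    rewrite !cv; apply/eqP => /finj; rewrite !inE => /(_ (phik i) (phik j)) pij.
    move: nsp ij pij; rewrite /special /phi /=.
    have [ei|ei] := ord_cases i; have [ej|ej] := ord_cases j;
      rewrite ?ei ?ej ?ltnn ?j0k //.
    - by move=> _ /eqP ij pij; apply: ij; apply: val_inj.
    - by move=> + _ pij; rewrite pij !eqxx.
    - by move=> + _ pij; rewrite -pij !eqxx orbT.
    - by move=> _ /eqP ij _; apply: ij; apply: val_inj; rewrite /= ei ej.
  move=> /near_neq; apply: (@filterS _ (nbhs sg)) => u /= hu _ _; exact: hu.
have [e e0 He] := near_to_ball H.
pose e' := Num.min e (t - sg).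
have e'0 : 0 < e' by rewrite lt_min e0 subr_gt0 sglt.
apply: (@count_lem _ _ mu n hn hmono sg c e') => // u /andP[su ue] i j ij.
have ue1 : u < sg + e by apply: (lt_le_trans ue); rewrite lerD2l ge_min lexx.
have ut : u <= t.
  apply: ltW; apply: (lt_le_trans ue).
  by rewrite -lerBrDl ge_min lexx orbT.
have [sp|nsp] := boolP (special (i, j)); last first.
  by apply: (He u _ (i, j)) => //; rewrite su ue1.
have k0 : (k != j0)%N by rewrite neq_ltn j0k orbT.
move: sp; rewrite /special /= => /orP[] /andP[/eqP ei /eqP ej].
- rewrite /c ei ej eqxx (negbTE k0) ?ltnn.
  by apply: after; rewrite su ut.
- rewrite /c ei ej eqxx (negbTE k0) ?ltnn.
  by rewrite eq_sym; apply: after; rewrite su ut.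
Qed.
End Core2.
Section Meas.
Context {R : realType} {X : normedModType R}.
Variables (mu : R -> probability (borel X) R) (n : R -> nat).
Hypothesis hsep : separable X.
Hypothesis hn : forall t, 0 <= t -> (supp (mu t) #= `I_(n t))%card.
Variable eta : probability (curve_borel X) R.
Hypothesis heta : forall t, 0 <= t -> push_ev t eta (mu t).

Lemma finS t : 0 <= t -> finite_set (supp (mu t)).
Proof. by move=> t0; exists (n t); apply: hn. Qed.

Lemma measSC t : 0 <= t -> measurable (~` supp (mu t) : set (borel X)).
Proof. by move=> t0; apply: open_meas; rewrite openC; apply: fin_closed; apply: finS. Qed.

Definition Cm (m : nat) : set (curve_borel X) :=
  match unpickle m : option rat with
  | Some q => if (0 <= (ratr q : R)) then ev (ratr q) @^-1` (~` supp (mu (ratr q))) else set0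
  | None => set0
  end.

Lemma Cm_meas m : measurable (Cm m).
Proof.
rewrite /Cm; case: (unpickle m) => // q; case: ifP => // q0.
by apply: ev_meas => //; apply: measSC.
Qed.

Lemma Cm_null m : eta (Cm m) = 0%E.
Proof.
rewrite /Cm; case: (unpickle m) => [q|]; last exact: measure0.
case: ifP => q0; last exact: measure0.
by rewrite heta // ?supp_full //; [apply: finS | apply: measSC].
Qed.

Lemma GsC : ~` Gs mu = \bigcup_m Cm m.
Proof.
apply/seteqP; split => g.
  move=> nG.
  have [q /not_implyP [q0 nS]] : exists q : rat,
      ~ (0 <= (ratr q : R) -> supp (mu (ratr q)) (ev (ratr q) g)).
    by apply/existsNP.
  exists (pickle q); first by [].
  rewrite /Cm pickleK q0; exact: nS.
move=> [m _]; rewrite /Cm; case: (unpickle m) => [q|//].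
by case: ifP => // q0 /= nS Gg; apply: nS; apply: Gg.
Qed.

Lemma Gs_meas : measurable (Gs mu : set (curve_borel X)).
Proof.
rewrite -[Gs mu]setCK GsC; apply: measurableC.
by apply: bigcupT_measurable => m; apply: Cm_meas.
Qed.

Lemma GsC_null : eta (~` Gs mu) = 0%E.
Proof.
have : eta.-negligible (\bigcup_m Cm m).
  by apply: negligible_bigcup => m; exists (Cm m); split => //; [apply: Cm_meas|apply: Cm_null].
move=> [A [mA A0 sA]]; apply/eqP; rewrite -measure_le0 -A0.
apply: le_measure; rewrite ?inE //; last by rewrite GsC.
by apply: measurableC; apply: Gs_meas.
Qed.

Lemma eta_Gs (A : set (curve_borel X)) : measurable A -> eta (A `&` Gs mu) = eta A.
Proof.
move=> mA.
have -> : eta A = (eta (A `\` Gs mu) + eta (A `&` Gs mu))%E.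
  by apply: measureDI => //; apply: Gs_meas.
suff -> : eta (A `\` Gs mu) = 0%E by rewrite add0e.
apply/eqP; rewrite -measure_le0 -GsC_null; apply: le_measure; rewrite ?inE.
- by apply: measurableD => //; apply: Gs_meas.
- by apply: measurableC; apply: Gs_meas.
by move=> g [].
Qed.

Lemma Hrep_eta t z : 0 <= t -> supp (mu t) z -> exists g, Gs mu g /\ ev t g = z.
Proof.
move=> t0 Sz.
have mz : measurable (ev t @^-1` [set z] : set (curve_borel X)).
  by apply: ev_meas => //; apply: set1_meas.
have := atom_pos hsep (mu t) z (finS t t0) Sz; rewrite -heta //; last exact: set1_meas.
rewrite -eta_Gs //; apply: contraPP => /forallNP nex.
suff -> : ev t @^-1` [set z] `&` Gs mu = set0 by rewrite measure0 ltxx.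
by apply/seteqP; split => // g [/= ez Gg]; apply: (nex g).
Qed.

End Meas.
Lemma in_bigsetU {T} n (F : 'I_n -> set T) g :
  (\big[setU/set0]_(i < n) F i) g <-> exists i, F i g.
Proof.
split; last by move=> [i Fi]; rewrite (bigD1 i) //=; left.
elim/big_rec: _ => [//|i A _ IH [Fi|/IH //]]; by exists i.
Qed.

Section Final.
Context {R : realType} {X : normedModType R}.
Variables (N : nat) (a : 'I_N -> R) (x : 'I_N -> X).
Variables (mu : R -> probability (borel X) R) (n : R -> nat).
Hypothesis hsep : separable X.
Hypothesis ha : forall i, 0 < a i.
Hypothesis hx : injective x.
Hypothesis hmu0 : forall A : set (borel X), measurable A ->
     mu 0 A = (\sum_(i < N) (a i)%:E * \d_(x i : borel X) A)%E.
Hypothesis hn : forall t, 0 <= t -> (supp (mu t) #= `I_(n t))%card.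
Hypothesis hmono : forall s t, 0 <= s -> s <= t -> (n t <= n s)%N.

Lemma supp0 y : supp (mu 0) y -> exists i, y = x i.
Proof.
move=> Sy; apply: contrapT => /forallNP ny.
pose U := ~` range x.
have oU : open U.
  rewrite openC; apply: fin_closed; apply: finite_image; exact: finite_finset.
have Uy : U y by move=> [i _ xi]; apply: (ny i).
have := Sy U oU Uy; rewrite hmu0; last exact: open_meas.
rewrite big1 ?ltxx // => i _; rewrite diracE.
have -> : (x i \in U) = false.
  by apply/negbTE; rewrite notin_setE /U /= => /(_ (ex_intro2 _ _ i I erefl)).
by rewrite mule0.
Qed.

Lemma mu0x i : mu 0 [set x i] = (a i)%:E.
Proof.
rewrite hmu0; last exact: set1_meas.
rewrite (bigD1 i) //= big1 ?adde0.
  by rewrite diracE mem_set // mule1.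
move=> j ji; rewrite diracE.
have -> : (x j \in [set x i]) = false.
  apply/negbTE; rewrite notin_setE /= => /hx eji.
  by rewrite eji eqxx in ji.
by rewrite mule0.
Qed.

Variable eta : probability (curve_borel X) R.
Hypothesis heta : forall t, 0 <= t -> push_ev t eta (mu t).

Let Hrep := Hrep_eta mu n hsep hn eta heta.

Definition Ei i : set (curve_borel X) := ev 0 @^-1` [set x i] `&` Gs mu.

Lemma Ei_meas i : measurable (Ei i).
Proof.
apply: measurableI; last exact: (Gs_meas mu n hn).
by apply: ev_meas => //; apply: set1_meas.
Qed.

Lemma eta_Ei i : eta (Ei i) = (a i)%:E.
Proof.
rewrite /Ei (eta_Gs mu n hsep hn eta heta); last by apply: ev_meas => //; apply: set1_meas.
by rewrite heta //; [apply: mu0x | apply: set1_meas].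
Qed.

Lemma rep : exists gam : 'I_N -> curve X,
  [/\ forall i, Gs mu (gam i), forall i, ev 0 (gam i) = x i &
  forall A : set (curve_borel X), measurable A ->
          eta A = (\sum_(i < N) (a i)%:E * \d_(gam i : curve_borel X) A)%E].
Proof.
have hex : forall i, exists g, Ei i g.
  move=> i; apply: contrapT => /forallNP ne.
  have : eta (Ei i) = 0%E.
    by rewrite (_ : Ei i = set0) ?measure0 //; apply/seteqP; split => // g /ne.
  by rewrite eta_Ei => -[] /eqP; rewrite gt_eqF.
have [gam hgam] := choice hex.
have Ggam i : Gs mu (gam i) by case: (hgam i).
have egam i : ev 0 (gam i) = x i by case: (hgam i).
have EiE i : Ei i = [set gam i].
  apply/seteqP; split => [g [eg Gg]|g ->]; last exact: hgam.
  apply: curve_ext => t t0.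
  apply: (determ mu n hn hmono Hrep g (gam i) 0) => //.
  by rewrite egam.
exists gam; split => // A mA.
rewrite -(eta_Gs mu n hsep hn eta heta A mA).
have -> : A `&` Gs mu = \big[setU/set0]_(i < N) (A `&` Ei i).
  apply/seteqP; split => [g [Ag Gg]|g].
    have [i ei] := supp0 _ (inS mu n hn hmono Hrep 0 g (lexx 0) Gg).
    by apply/in_bigsetU; exists i; split => //; split.
  by move=> /in_bigsetU [i [Ag [_ Gg]]]; split.
rewrite measure_bigsetU_ord.
- apply: eq_bigr => i _; rewrite diracE.
  case: (boolP (gam i \in A)) => [/set_mem Ag|/negP nA].
    have -> : A `&` Ei i = Ei i.
      by rewrite EiE; apply/seteqP; split => [g []//|g /= ->]; split.
    by rewrite mule1; apply: eta_Ei.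
  have -> : A `&` Ei i = set0.
    rewrite EiE; apply/seteqP; split => // g [Ag eg]; apply: nA.
    by apply/mem_set; rewrite -eg.
  by rewrite measure0 mule0.
- by move=> i; apply: measurableI => //; apply: Ei_meas.
- move=> i j _ _ [g [[_ [ei _]] [_ [ej _]]]].
  by apply: hx; rewrite -ei -ej.
Qed.

End Final.
Theorem theoremB1 (R : realType) (X : completeNormedModType R)
  (ip : X -> X -> R) (hip : is_inner_product ip) (hsep : separable X)
  (N : nat) (hN : (1 <= N)%N) (a : 'I_N -> R) (x : 'I_N -> X)
  (ha : forall i, 0 < a i) (hsum : \sum_(i < N) a i = 1)
  (hx : injective x)
  (mu : R -> probability (borel X) R)
  (hmu2 : forall t, 0 <= t -> finite_second_moment (mu t))
  (hmu0 : forall A : set (borel X), measurable A ->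
     mu 0 A = (\sum_(i < N) (a i)%:E * \d_(x i : borel X) A)%E)
  (hcard : exists n : R -> nat,
     (forall t, 0 <= t -> (supp (mu t) #= `I_(n t))%card) /\
     (forall s t, 0 <= s -> s <= t -> (n t <= n s)%N)) :
  (forall eta : probability (curve_borel X) R,
     (forall t, 0 <= t -> push_ev t eta (mu t)) ->
     exists gam : 'I_N -> curve X,
       (forall A : set (curve_borel X), measurable A ->
          eta A = (\sum_(i < N) (a i)%:E * \d_(gam i : curve_borel X) A)%E) /\
       injective gam /\
       (forall i, ev 0 (gam i) = x i) /\
       (forall (i j : 'I_N) (s : R), i != j -> 0 <= s ->
          ev s (gam i) = ev s (gam j) ->
          forall t, s <= t -> ev t (gam i) = ev t (gam j)))
  /\
  (forall eta1 eta2 : probability (curve_borel X) R,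
     (forall t, 0 <= t -> push_ev t eta1 (mu t)) ->
     (forall t, 0 <= t -> push_ev t eta2 (mu t)) ->
     forall A : set (curve_borel X), measurable A -> eta1 A = eta2 A).
Proof.
have [n [hn hmono]] := hcard.
split.
  move=> eta heta.
  have [gam [Gg eg rp]] := rep N a x mu n hsep ha hx hmu0 hn hmono eta heta.
  exists gam; split => //; split.
    by move=> i j e; apply: hx; rewrite -(eg i) -(eg j) e.
  split => // i j s ij s0 es t st.
  exact: (determ mu n hn hmono (Hrep_eta mu n hsep hn eta heta)
            (gam i) (gam j) s s0 (Gg i) (Gg j) es t st).
move=> eta1 eta2 h1 h2 A mA.
have [g1 [G1 e1 r1]] := rep N a x mu n hsep ha hx hmu0 hn hmono eta1 h1.
have [g2 [G2 e2 r2]] := rep N a x mu n hsep ha hx hmu0 hn hmono eta2 h2.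
have e : g1 = g2.
  apply/funext => i; apply: curve_ext => t t0.
  apply: (determ mu n hn hmono (Hrep_eta mu n hsep hn eta1 h1)
            (g1 i) (g2 i) 0 (lexx 0) (G1 i) (G2 i) _ t t0).
  by rewrite e1 e2.
by rewrite r1 // r2 // e.
Qed.
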